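(* Let $R$ be a saturated transfer system on a finite modular lattice $M$ and let $x,y,x\wedge y,x\vee y$ form a covering diamond in $M$. If three of the four covering relations $x\wedge y\le x$, $x\wedge y\le y$, $x\le x\vee y$, $y\le x\vee y$ belong to $R$, then the fourth also belongs to $R$.
   Context: A lattice $M$ is modular if $a\le b$ implies $a\vee(x\wedge b)=(a\vee x)\wedge b$. A transfer system on a finite lattice $(P,\le)$ is a partial order $R$ refining $\le$ closed under restriction: $x\,R\,z$ and $y\le z$ imply $(x\wedge y)\,R\,y$; it is saturated if $x\,R\,y$, $y\le z$ and $x\,R\,z$ imply $y\,R\,z$. A covering diamond is a quadruple $x,y,x\wedge y,x\vee y$ with $x\ne y$ such that $x\vee y$ covers $x$ and $y$, and $x$ and $y$ both cover $x\wedge y$. *)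

(* Defs.v *)
From mathcomp Require Import all_boot all_order.
Set Implicit Arguments. Unset Strict Implicit. Unset Printing Implicit Defensive.
Import Order.TTheory.
Local Open Scope order_scope.

Definition modular_lattice d (M : latticeType d) : Prop :=
  forall a b x : M, a <= b -> a `|` (x `&` b) = (a `|` x) `&` b.

Definition covers d (M : porderType d) (y x : M) : Prop :=
  x < y /\ forall z : M, x < z -> z < y -> False.

Definition refining_partial_order d (M : porderType d) (R : rel M) : Prop :=
  [/\ forall x, R x x,
      forall x y, R x y -> R y x -> x = y,
      forall x y z, R x y -> R y z -> R x z
    & forall x y, R x y -> x <= y].

Definition transfer_system d (M : latticeType d) (R : rel M) : Prop :=
  refining_partial_order R /\
  forall x y z : M, R x z -> y <= z -> R (x `&` y) y.

Definition saturated d (M : latticeType d) (R : rel M) : Prop :=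
  forall x y z : M, R x y -> y <= z -> R x z -> R y z.

Definition covering_diamond d (M : latticeType d) (x y : M) : Prop :=
  [/\ x != y, covers (x `|` y) x, covers (x `|` y) y,
      covers x (x `&` y) & covers y (x `&` y)].

(* Main.v *)
Require Import Defs.
From mathcomp Require Import all_boot all_order.
Local Open Scope order_scope.
Import Order.TTheory.

Theorem lemma3p5 (d : Order.disp_t) (M : finLatticeType d) (R : rel M) (x y : M) :
  modular_lattice M -> transfer_system R -> saturated R ->
  covering_diamond x y ->
  let c1 := R (x `&` y) x in
  let c2 := R (x `&` y) y in
  let c3 := R x (x `|` y) in
  let c4 := R y (x `|` y) in
  [/\ (c2 /\ c3 /\ c4 -> c1), (c1 /\ c3 /\ c4 -> c2),
      (c1 /\ c2 /\ c4 -> c3) & (c1 /\ c2 /\ c3 -> c4)].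
Proof.
move=> _ [[Rr Ra Rt Rle] Rres] Rsat _ /=.
have mx : x `&` y <= x by exact: leIl.
have my : x `&` y <= y by exact: leIr.
have xj : x <= x `|` y by exact: leUl.
have yj : y <= x `|` y by exact: leUr.
split.
- move=> [h2 [_ h4]].
  have := Rres _ _ _ (Rt _ _ _ h2 h4) xj.
  by rewrite (meet_idPl mx).
- move=> [h1 [h3 _]].
  have := Rres _ _ _ (Rt _ _ _ h1 h3) yj.
  by rewrite (meet_idPl my).
- move=> [h1 [h2 h4]].
  exact: Rsat _ _ _ h1 xj (Rt _ _ _ h2 h4).
- move=> [h1 [h2 h3]].
  exact: Rsat _ _ _ h2 yj (Rt _ _ _ h1 h3).
Qed.
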